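(* Let $F:\mathbb{R}^d\to\mathbb{R}^d$ be $L$-Lipschitz, $G:\mathbb{R}^d\rightrightarrows\mathbb{R}^d$ maximally monotone, the solution set of $0\in F(x)+G(x)$ nonempty, and $x^\star$ a solution satisfying $\langle u,x-x^\star\rangle\ge-\rho\|u\|^2$ for all $(x,u)$ in the graph of $F+G$, with $0<\rho<\eta$. Let $\alpha=1-\frac\rho\eta$ and suppose $(x_k)$ satisfies $x_{k+1}=(1-\alpha)x_k+\alpha\widetilde J_k$ where $\|J_{\eta(F+G)}(x_k)-\widetilde J_k\|\le\varepsilon_k$ for some $\varepsilon_k>0$. Then for $k\ge0$, $$\|x_{k+1}-x^\star\|\le\|x_k-x^\star\|+\Big(1-\frac\rho\eta\Big)\varepsilon_k.$$
   Context: For an operator $A$, $J_A=(\mathrm{Id}+A)^{-1}$ is its resolvent. *)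

(* Defs.v *)
From HB Require Import structures.
From mathcomp Require Import all_boot all_order all_algebra.
From mathcomp Require Import reals.
Set Implicit Arguments. Unset Strict Implicit. Unset Printing Implicit Defensive.
Import Order.TTheory GRing.Theory Num.Theory.
Local Open Scope ring_scope.

Definition dotv (R : realType) (d : nat) (u v : 'rV[R]_d) : R :=
  \sum_(i < d) u ord0 i * v ord0 i.
Definition normv (R : realType) (d : nat) (u : 'rV[R]_d) : R :=
  Num.sqrt (dotv u u).

(* A set-valued operator A : R^d ⇉ R^d is given by its graph: A x u <-> u ∈ A(x). *)
Definition setop (R : realType) (d : nat) := 'rV[R]_d -> 'rV[R]_d -> Prop.

Definition lipschitz (R : realType) (d : nat) (F : 'rV[R]_d -> 'rV[R]_d) (L : R) :=
  forall x y, normv (F x - F y) <= L * normv (x - y).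

Definition monotone_op (R : realType) (d : nat) (A : setop R d) :=
  forall x y u v, A x u -> A y v -> 0 <= dotv (u - v) (x - y).

Definition maximal_monotone (R : realType) (d : nat) (A : setop R d) :=
  monotone_op A /\
  forall B : setop R d, monotone_op B -> (forall x u, A x u -> B x u) ->
    forall x u, B x u -> A x u.

Definition sum_op (R : realType) (d : nat) (F : 'rV[R]_d -> 'rV[R]_d) (G : setop R d)
  : setop R d := fun x u => exists g, G x g /\ u = F x + g.

(* p ∈ J_{eta A}(x) = (Id + eta A)^{-1}(x)  iff  x ∈ p + eta A(p). *)
Definition resolvent (R : realType) (d : nat) (eta : R) (A : setop R d)
  (x p : 'rV[R]_d) : Prop :=
  exists u, A p u /\ x = p + eta *: u.

(* Main.v *)
Require Import Defs.
From HB Require Import structures.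
From mathcomp Require Import all_boot all_order all_algebra.
From mathcomp Require Import reals.
From mathcomp Require Import ring lra.
Import Order.TTheory GRing.Theory Num.Theory.
Local Open Scope ring_scope.

Lemma sq_le_aux (R : realFieldType) (B X : R) : B^+2 <= X^+2 -> 0 <= X -> B <= X.
Proof. nra. Qed.

Lemma triang_aux (R : realFieldType) (N A C B : R) :
  N ^+ 2 = A ^+ 2 + 2 * B + C ^+ 2 -> B <= A * C -> 0 <= N -> 0 <= A -> 0 <= C ->
  N <= A + C.
Proof. nra. Qed.

Section Aux.
Variables (R : realType) (d : nat).
Implicit Types (q u a b : 'rV[R]_d).

Lemma dotv_exp q u t : dotv (q + t *: u) (q + t *: u) =
  dotv q q + 2 * t * dotv u q + t ^+ 2 * dotv u u.
Proof.
rewrite /dotv !mulr_sumr -!big_split /=; apply: eq_bigr => i _; rewrite !mxE; ring.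
Qed.

Lemma dotv_ge0 q : 0 <= dotv q q.
Proof. rewrite /dotv; apply: sumr_ge0 => i _; by rewrite -expr2 sqr_ge0. Qed.

Lemma normv_sq q : normv q ^+ 2 = dotv q q.
Proof. by rewrite /normv sqr_sqrtr // dotv_ge0. Qed.

Lemma normv_ge0 q : 0 <= normv q.
Proof. exact: sqrtr_ge0. Qed.

Lemma cauchy_schwarz a b : dotv b a <= normv a * normv b.
Proof.
have H t : 0 <= dotv a a + 2 * t * dotv b a + t ^+ 2 * dotv b b.
  by rewrite -dotv_exp dotv_ge0.
set A := dotv a a in H *; set B := dotv b a in H *; set C := dotv b b in H *.
have hA : 0 <= A by apply: dotv_ge0.
have hC : 0 <= C by apply: dotv_ge0.
have disc : B ^+ 2 <= A * C.
  have [Cgt0|] := ltrP 0 C.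
    have := H (- B / C).
    have hCn : C != 0 by rewrite gt_eqF.
    have -> : A + 2 * (- B / C) * B + (- B / C) ^+ 2 * C = A - B ^+ 2 / C.
      by field.
    by rewrite subr_ge0 ler_pdivrMr.
  move=> Cle0; have C0 : C = 0 by apply/eqP; rewrite eq_le Cle0 hC.
  have [B0|Bn0] := eqVneq B 0.
    by rewrite B0 C0 expr0n /= mulr0.
  have := H (- (A + 1) / (2 * B)).
  have -> : A + 2 * (- (A + 1) / (2 * B)) * B + (- (A + 1) / (2 * B)) ^+ 2 * C = -1.
    by rewrite C0; field; rewrite Bn0.
  by rewrite ler0N1.
have hsa := normv_sq a; have hsb := normv_sq b.
have ga := normv_ge0 a; have gb := normv_ge0 b.
rewrite -/A in hsa; rewrite -/C in hsb.
rewrite -hsa -hsb -exprMn in disc.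
have gab : 0 <= normv a * normv b by apply: mulr_ge0.
move: disc gab; exact: sq_le_aux.
Qed.

Lemma normvD a b : normv (a + b) <= normv a + normv b.
Proof.
have e := dotv_exp a b 1; rewrite scale1r in e.
have cs := cauchy_schwarz a b.
have h1 := normv_sq (a + b); have hsa := normv_sq a; have hsb := normv_sq b.
have g1 := normv_ge0 (a + b); have ga := normv_ge0 a; have gb := normv_ge0 b.
nra.
Qed.

Lemma normvZ c q : 0 <= c -> normv (c *: q) = c * normv q.
Proof.
move=> c0; have e := dotv_exp 0 q c.
rewrite add0r in e.
have z1 : dotv (0 : 'rV[R]_d) 0 = 0 by rewrite /dotv; apply: big1 => i _; rewrite mxE mul0r.
have z2 : dotv q 0 = 0 by rewrite /dotv; apply: big1 => i _; rewrite mxE mulr0.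
rewrite z1 z2 mulr0 !add0r in e.
rewrite /normv e sqrtrM ?exprn_ge0 // sqrtr_sqr ger0_norm //.
Qed.

End Aux.

Lemma normvN (R : realType) (d : nat) (q : 'rV[R]_d) : normv (- q) = normv q.
Proof. by rewrite /normv /dotv; congr Num.sqrt; apply: eq_bigr => i _; rewrite !mxE mulrNN. Qed.

Lemma main_aux (R : realFieldType) (Q B C rho eta : R) :
  B >= - rho * C -> 0 <= C -> 0 < rho -> rho < eta ->
  Q + 2 * rho * B + rho ^+ 2 * C <= Q + 2 * eta * B + eta ^+ 2 * C.
Proof.
move=> hB hC h0 h1.
have p1 : 0 <= (eta - rho) * (B + rho * C).
  by apply: mulr_ge0; lra.
have p2 : 0 <= (eta - rho) ^+ 2 * C by apply: mulr_ge0 => //; apply: sqr_ge0.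
have -> : Q + 2 * eta * B + eta ^+ 2 * C =
  (Q + 2 * rho * B + rho ^+ 2 * C) + (2 * ((eta - rho) * (B + rho * C)) + (eta - rho) ^+ 2 * C).
  by ring.
by rewrite lerDl; apply: addr_ge0 => //; apply: mulr_ge0.
Qed.

Theorem lemmaB6 (R : realType) (d : nat) (F : 'rV[R]_d -> 'rV[R]_d) (G : setop R d)
  (L rho eta : R) (xstar : 'rV[R]_d)
  (x Jt : nat -> 'rV[R]_d) (eps : nat -> R) :
  lipschitz F L ->
  maximal_monotone G ->
  (exists z, sum_op F G z 0) ->
  sum_op F G xstar 0 ->
  (forall z u, sum_op F G z u -> dotv u (z - xstar) >= - rho * normv u ^+ 2) ->
  0 < rho -> rho < eta ->
  (forall k, 0 < eps k) ->
  (forall k, exists p, resolvent eta (sum_op F G) (x k) p /\ normv (p - Jt k) <= eps k) ->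
  (forall k, x k.+1 = (1 - (1 - rho / eta)) *: x k + (1 - rho / eta) *: Jt k) ->
  forall k, normv (x k.+1 - xstar) <= normv (x k - xstar) + (1 - rho / eta) * eps k.
Proof.
move=> _ _ _ _ Hw rho0 rhoeta _ HJ Hx k.
have [p [[u [Su xk]] hp]] := HJ k.
have hw := Hw _ _ Su.
have eta0 : 0 < eta by apply: lt_trans rhoeta.
have etan0 : eta != 0 by rewrite gt_eqF.
have a0 : 0 <= 1 - rho / eta.
  by rewrite subr_ge0 ler_pdivrMr // mul1r ltW.
have E1 : x k.+1 - xstar = ((p - xstar) + rho *: u) + (1 - rho / eta) *: (Jt k - p).
  by rewrite Hx xk; apply/rowP => i; rewrite !mxE; field.
have E2 : x k - xstar = (p - xstar) + eta *: u.
  by rewrite xk; apply/rowP => i; rewrite !mxE; ring.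
rewrite E1 E2.
apply: (le_trans (normvD _ _ _ _)).
rewrite normvZ // -(opprB p (Jt k)) normvN.
apply: lerD; last by apply: ler_wpM2l.
apply: sq_le_aux; last exact: normv_ge0.
rewrite !normv_sq !dotv_exp.
apply: main_aux => //; first by rewrite -normv_sq.
exact: dotv_ge0.
Qed.
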